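(* For every group $G$ and every positive integer $n$, the number of tuples $(g_1,\dots,g_n)\in G^n$ such that $\langle g_1,\dots,g_n\rangle=G$ is divisible by $|G'|$, the order of the commutator subgroup of $G$.
   Context: Groups need not be finite; divisibility is understood in the sense of cardinal arithmetic: an infinite cardinal is divisible by every nonzero cardinal not exceeding it. *)

(* Defs.v *)
From mathcomp Require Import all_boot.
From mathcomp Require Import monoid.

Set Implicit Arguments.
Unset Strict Implicit.
Unset Printing Implicit Defensive.

Local Open Scope group_scope.

Definition is_subgroup (G : groupType) (S : G -> Prop) : Prop :=
  S 1 /\ (forall x y, S x -> S y -> S (x * y^-1)).

Definition generated (G : groupType) (A : G -> Prop) : G -> Prop :=
  fun x => forall S : G -> Prop, is_subgroup S -> (forall a, A a -> S a) -> S x.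

Definition derived_subgroup (G : groupType) : G -> Prop :=
  generated (fun c : G => exists x y : G, c = [~ x, y]).

Definition generating_tuples (G : groupType) (n : nat) : ('I_n -> G) -> Prop :=
  fun g => forall x : G, generated (fun a : G => exists i : 'I_n, a = g i) x.

(* Cardinal divisibility: |A| divides |B| iff |B| = |A| * |C| for some
   cardinal |C|, i.e. B is in bijection with A x C for some type C. *)
Definition card_dvd (X Y : Type) (A : X -> Prop) (B : Y -> Prop) : Prop :=
  exists (C : Type) (f : {x : X | A x} * C -> {y : Y | B y}), bijective f.

(* Main.v *)
Require Import Defs.
From mathcomp Require Import all_boot.
From mathcomp Require Import monoid.
From Stdlib Require Import Classical ClassicalEpsilon FunctionalExtensionality PropExtensionality ProofIrrelevance.
Set Implicit Arguments.
Unset Strict Implicit.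
Unset Printing Implicit Defensive.
Local Open Scope group_scope.

Lemma gen_mono (G : groupType) (A A' : G -> Prop) x :
  (forall a, A a -> A' a) -> generated A x -> generated A' x.
Proof. by move=> H gx S sS HS; apply: gx => // a /H; apply: HS. Qed.

Lemma gen_incl (G : groupType) (A : G -> Prop) a : A a -> generated A a.
Proof. by move=> Aa S _ HS; apply: HS. Qed.

Lemma sub1 (G : groupType) (S : G -> Prop) : is_subgroup S -> S 1.
Proof. by case. Qed.
Lemma subV (G : groupType) (S : G -> Prop) x : is_subgroup S -> S x -> S x^-1.
Proof. by case=> S1 SM Sx; rewrite -[x^-1]mul1g; apply: SM. Qed.
Lemma subM (G : groupType) (S : G -> Prop) x y : is_subgroup S -> S x -> S y -> S (x * y).
Proof. by move=> sS Sx Sy; rewrite -[y]invgK; apply: sS.2 => //; apply: subV. Qed.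
Lemma subD (G : groupType) (S : G -> Prop) x y : is_subgroup S -> S x -> S y -> S (x * y^-1).
Proof. by move=> sS; apply: sS.2. Qed.

Lemma gen_sub (G : groupType) (A : G -> Prop) : is_subgroup (generated A).
Proof.
split; first by move=> S [S1 _].
by move=> x y gx gy S sS HS; apply: sS.2; [apply: gx | apply: gy].
Qed.

Lemma gen_min (G : groupType) (A S : G -> Prop) x :
  is_subgroup S -> (forall a, A a -> S a) -> generated A x -> S x.
Proof. by move=> sS HS gx; apply: gx. Qed.

Definition genG (G : groupType) (A : G -> Prop) := forall x, generated A x.

Lemma genG_trans (G : groupType) (A A' : G -> Prop) :
  (forall a, A' a -> generated A a) -> genG A' -> genG A.
Proof. move=> H g x; apply: (gen_min (gen_sub A) H); exact: g. Qed.

Lemma gen_hom (G : groupType) (f : G -> G) (A : G -> Prop) x :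
  f 1 = 1 -> (forall x y, f (x * y^-1) = f x * (f y)^-1) ->
  generated A x -> generated (fun y => exists a, A a /\ y = f a) (f x).
Proof.
move=> f1 fM gx S sS HS.
apply: (gen_min (S := fun z => S (f z))) gx.
- split; first by rewrite f1; case: sS.
  by move=> u v Su Sv; rewrite fM; apply: sS.2.
- by move=> a Aa; apply: HS; exists a.
Qed.

Definition normal (G : groupType) (S : G -> Prop) := forall u x, S x -> S (u * x * u^-1).
Definition cong (G : groupType) (S : G -> Prop) a b := S (a * b^-1).

Lemma cong_refl (G : groupType) (S : G -> Prop) a : is_subgroup S -> cong S a a.
Proof. by move=> sS; rewrite /cong mulgV; case: sS. Qed.
Lemma cong_sym (G : groupType) (S : G -> Prop) a b : is_subgroup S -> cong S a b -> cong S b a.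
Proof. by move=> sS /(subV sS); rewrite /cong invgF. Qed.
Lemma cong_trans (G : groupType) (S : G -> Prop) a b c : is_subgroup S ->
  cong S a b -> cong S b c -> cong S a c.
Proof. by move=> sS h1 h2; have := subM sS h1 h2; rewrite /cong divgKA. Qed.
Lemma congMl (G : groupType) (S : G -> Prop) u a b : normal S ->
  cong S a b -> cong S (u * a) (u * b).
Proof. by move=> nS /(nS u); rewrite /cong invgM !mulgA. Qed.
Lemma congMr (G : groupType) (S : G -> Prop) u a b :
  cong S a b -> cong S (a * u) (b * u).
Proof. by rewrite /cong mulgKA. Qed.
Lemma cong_mul (G : groupType) (S : G -> Prop) m a : is_subgroup S -> S m -> cong S (m * a) a.
Proof. by move=> sS; rewrite /cong mulgK. Qed.
Lemma cong1 (G : groupType) (S : G -> Prop) a : cong S a 1 <-> S a.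
Proof. by rewrite /cong invg1 mulg1. Qed.

Lemma comm_subgroup (G : groupType) (S : G -> Prop) y : is_subgroup S -> normal S ->
  is_subgroup (fun x => cong S (x * y) (y * x)).
Proof.
move=> sS nS; split; first by rewrite mul1g mulg1; apply: cong_refl.
move=> x1 x2 h1 h2.
have h3 : cong S (y * x2^-1) (x2^-1 * y).
  have := congMr (x2^-1) (congMl (x2^-1) nS h2).
  by rewrite !mulgA mulVg mul1g mulgK.
apply: (cong_trans sS (b := x1 * (y * x2^-1))).
  by rewrite -mulgA; apply: congMl => //; apply: cong_sym.
by rewrite !mulgA; apply: congMr.
Qed.

Definition cj (G : groupType) (u x : G) := u * x * u^-1.

Lemma cj1 (G : groupType) (u : G) : cj u 1 = 1.
Proof. by rewrite /cj mulg1 mulgV. Qed.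
Lemma cjD (G : groupType) (u x y : G) : cj u (x * y^-1) = cj u x * (cj u y)^-1.
Proof. by rewrite /cj !invgM invgK !mulgA mulgVK. Qed.
Lemma cjK (G : groupType) (u x : G) : cj u^-1 (cj u x) = x.
Proof. by rewrite /cj invgK !mulgA mulVg mul1g mulgVK. Qed.
Lemma cjKV (G : groupType) (u x : G) : cj u (cj u^-1 x) = x.
Proof. by rewrite -{1}(invgK u) cjK. Qed.
Lemma cjE (G : groupType) (u x : G) : cj u x = x ^ u^-1.
Proof. by rewrite /cj /conjg invgK mulgA. Qed.

Lemma gen_cj (G : groupType) (u : G) A x :
  generated A x -> generated (fun y => exists a, A a /\ y = cj u a) (cj u x).
Proof. by apply: gen_hom; [apply: cj1 | apply: cjD]. Qed.
Arguments gen_cj {G} u {A x}.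

Lemma genG_cj (G : groupType) (u : G) A :
  genG A -> genG (fun y => exists a, A a /\ y = cj u a).
Proof. by move=> g x; rewrite -(cjKV u x); apply: gen_cj. Qed.
Arguments genG_cj {G} u {A}.

Lemma derived_normal (G : groupType) : normal (@derived_subgroup G).
Proof.
move=> u x dx; have := gen_cj u dx; rewrite -/(cj u x).
apply: gen_mono => y [a [[p [q ->]] ->]].
by exists (cj u p), (cj u q); rewrite !cjE conjRg.
Qed.

Lemma derived_sub (G : groupType) : is_subgroup (@derived_subgroup G).
Proof. exact: gen_sub. Qed.

Definition Nset (G : groupType) (c : G) :=
  @derived_subgroup G c /\
  forall B : G -> Prop, genG (fun y => B y \/ y = c) -> genG B.

Lemma genG_add (G : groupType) (B : G -> Prop) c :
  generated B c -> genG (fun y => B y \/ y = c) -> genG B.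
Proof.
move=> gc; apply: genG_trans => a [Ba | ->]; last by [].
exact: gen_incl.
Qed.

Lemma N_sub (G : groupType) : is_subgroup (@Nset G).
Proof.
split.
  split; first by apply: sub1; apply: derived_sub.
  by move=> B; apply: genG_add => S [S1 _].
move=> c d [Dc Nc] [Dd Nd]; split; first exact: (subD (@derived_sub G) Dc Dd).
move=> B g.
have g2 : genG (fun y => (B y \/ y = c) \/ y = d).
  apply: genG_trans g => a [Ba | ->].
    by apply: gen_incl; left; left.
  apply: (subD (gen_sub _)).
    by apply: gen_incl; left; right.
  by apply: gen_incl; right.
by apply: Nc; apply: Nd.
Qed.

Lemma N_normal (G : groupType) : normal (@Nset G).
Proof.
move=> u c [Dc Nc]; split; first by apply: derived_normal.
move=> B g.
pose B' := fun y => exists a, B a /\ y = cj u^-1 a.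
have g1 : genG (fun y => B' y \/ y = c).
  have := genG_cj u^-1 g; apply: genG_trans => a [b [[Bb | ->] ->]].
    by apply: gen_incl; left; exists b.
  by apply: gen_incl; right; rewrite -/(cj u c) cjK.
have := genG_cj u (Nc _ g1); apply: genG_trans => a [b [[b' [Bb' ->]] ->]].
by rewrite cjKV; apply: gen_incl.
Qed.

Lemma removal (G : groupType) (l : seq G) (B : G -> Prop) :
  genG (fun y => B y \/ (List.In y l /\ Nset y)) -> genG B.
Proof.
elim: l B => [|a l IH] B g.
  by apply: genG_trans g => y [By | [[] _]]; apply: gen_incl.
pose B' := fun y => B y \/ (y = a /\ Nset y).
have gB' : genG B'.
  apply: IH; apply: genG_trans g => y [By | [[<-|Hy] Ny]]; apply: gen_incl.
  - by left; left.
  - by left; right.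
  - by right.
case: (classic (Nset a)) => Na.
  apply: Na.2; apply: genG_trans gB' => y [By | [-> _]]; apply: gen_incl; by [left | right].
by apply: genG_trans gB' => y [By | [-> Ny]] //; apply: gen_incl.
Qed.

Lemma extraction (G : groupType) (A : G -> Prop) x : generated A x ->
  exists l : seq G, (forall y, List.In y l -> A y) /\ generated (fun y => List.In y l) x.
Proof.
move=> gx; apply: (gen_min (S := fun x => exists l : seq G, (forall y, List.In y l -> A y) /\ generated (fun y => List.In y l) x)) gx.
- split.
    exists [::]; split => //; apply: sub1; apply: gen_sub.
  move=> u v [l1 [H1 g1]] [l2 [H2 g2]]; exists (l1 ++ l2); split.
    by move=> y Hy; case: (List.in_app_or _ _ _ Hy) => [/H1|/H2].
  apply: (subD (gen_sub _)).
    by apply: gen_mono g1 => y Hy; apply: List.in_or_app; left.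
  by apply: gen_mono g2 => y Hy; apply: List.in_or_app; right.
- move=> a Aa; exists [:: a]; split; first by move=> y [<-|[]].
  by apply: gen_incl; left.
Qed.

Lemma In_mem (T : eqType) (x : T) (s : seq T) : x \in s -> List.In x s.
Proof.
elim: s => [|a s IH] //; rewrite in_cons => /orP [/eqP -> | /IH]; by [left | right].
Qed.

Lemma In_flatten (T : eqType) (U : Type) (l : T -> seq U) (s : seq T) i y :
  i \in s -> List.In y (l i) -> List.In y (flatten (map l s)).
Proof.
elim: s => [|a s IH] //; rewrite in_cons /= => /orP [/eqP -> | /IH H] Hy;
  apply: List.in_or_app; by [left | right; apply: H].
Qed.

Definition Gen (G : groupType) (n : nat) (r : 'I_n -> G) :=
  genG (fun a => exists i, a = r i).

Lemma P1 (G : groupType) (n : nat) (r w : 'I_n -> G) :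
  Gen r -> (forall i, Nset (w i)) -> Gen (fun i => w i * r i).
Proof.
move=> g Nw.
apply: (@removal _ (map w (enum 'I_n))).
apply: genG_trans g => y [i ->].
have -> : r i = (w i)^-1 * (w i * r i) by rewrite mulKg.
apply: (subM (gen_sub _)).
  apply: (subV (gen_sub _)); apply: gen_incl; right; split => //.
  by apply: In_mem; apply: map_f; rewrite mem_enum.
by apply: gen_incl; left; exists i.
Qed.

Lemma cjM (G : groupType) (a b k : G) : cj (a * b) k = cj a (cj b k).
Proof. by rewrite /cj invgM !mulgA. Qed.

Lemma P2 (G : groupType) (n : nat) (r : 'I_n -> G) f :
  derived_subgroup f -> Gen r -> (forall i, cong (@Nset G) (f * r i) (r i * f)) -> Nset f.
Proof.
move=> Df g Hr.
have sN := @N_sub G; have nN := @N_normal G.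
have Ha : forall x, cong (@Nset G) (f * x) (x * f).
  move=> x; apply: cong_sym => //.
  apply: (gen_min (comm_subgroup f sN nN)) (g x) => a [i ->].
  by apply: cong_sym.
have Hb : forall x, cong (@Nset G) (f^-1 * x) (x * f^-1).
  move=> x; apply: cong_sym => //.
  have := congMr (f^-1) (congMl (f^-1) nN (Ha x)).
  by rewrite !mulgA mulVg mul1g mulgK.
split => // B gB.
pose K := generated (fun y => B y \/ Nset y).
have sK : is_subgroup K by apply: gen_sub.
have BK : forall b, B b -> K b by move=> b Bb; apply: gen_incl; left.
have NK : forall m, Nset m -> K m by move=> m Nm; apply: gen_incl; right.
have fK : forall k, K k -> K (cj f k) /\ K (cj f^-1 k).
  move=> k; apply: (gen_min (S := fun k => K (cj f k) /\ K (cj f^-1 k))).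
    split; first by rewrite !cj1; split; apply: (sub1 sK).
    by move=> u v [h1 h2] [h3 h4]; rewrite !cjD; split; apply: (subD sK).
  move=> a [Ba | Na]; last by split; apply: NK; apply: nN.
  split.
    have -> : cj f a = (f * a * (a * f)^-1) * a by rewrite /cj invgM !mulgA mulgVK.
    by apply: (subM sK); [apply: NK; apply: Ha | apply: BK].
  have -> : cj f^-1 a = (f^-1 * a * (a * f^-1)^-1) * a by rewrite /cj invgM !mulgA mulgVK.
  by apply: (subM sK); [apply: NK; apply: Hb | apply: BK].
have nK : normal K.
  pose T := fun u => forall k, K k -> K (cj u k) /\ K (cj u^-1 k).
  have sT : is_subgroup T.
    split.
      by move=> k Kk; rewrite invg1 /cj invg1 mulg1 mul1g.
    move=> u v Tu Tv k Kk; split.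
      by rewrite cjM; apply: (Tu _ (Tv _ Kk).2).1.
    by rewrite invgM invgK cjM; apply: (Tv _ (Tu _ Kk).2).1.
  move=> u k Kk; apply: (gen_min (S := T) sT _ (gB u) k Kk).1.
  move=> a [Ba | ->]; last by [].
  move=> k' Kk'; rewrite /cj; split; apply: (subM sK) => //;
    [apply: (subM sK) | apply: (subV sK) | apply: (subM sK) | rewrite invgK] => //;
    by [apply: BK | apply: (subV sK); apply: BK].
have Hc : forall x y, cong K (x * y) (y * x).
  move=> x y; apply: (gen_min (comm_subgroup y sK nK)) (gB x).
  move=> a [Ba | ->] /=.
    apply: (cong_trans sK (b := y)); first exact: (@cong_mul G K a y sK (BK _ Ba)).
    by rewrite /cong invgM mulgA; apply: nK; apply: (subV sK); apply: BK.
  by apply: NK; apply: Ha.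
have DK : forall x, derived_subgroup x -> K x.
  move=> x; apply: gen_min => // c [p [q ->]].
  have := Hc p^-1 q^-1; rewrite /cong invgM !invgK.
  by rewrite /commg /conjg !mulgA.
have gBN : genG (fun y => B y \/ Nset y).
  apply: genG_trans gB => a [Ba | ->]; [by apply: BK | by apply: DK].
have ex : forall i, exists l : seq G, (forall y, List.In y l -> B y \/ Nset y) /\
   generated (fun y => List.In y l) (r i) by move=> i; apply: extraction.
pose l := fun i => proj1_sig (constructive_indefinite_description _ (ex i)).
have hl : forall i, (forall y, List.In y (l i) -> B y \/ Nset y) /\
   generated (fun y => List.In y (l i)) (r i).
  by move=> i; rewrite /l; case: constructive_indefinite_description.
apply: (@removal _ (flatten (map l (enum 'I_n)))).
apply: genG_trans g => a [i ->].
apply: gen_mono (hl i).2 => y Hy.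
case: ((hl i).1 y Hy) => [By | Ny]; [by left | right; split => //].
by apply: (In_flatten (i := i)) => //; rewrite mem_enum.
Qed.

Lemma cong_cj (G : groupType) (S : G -> Prop) u a b :
  normal S -> cong S a b -> cong S (cj u a) (cj u b).
Proof. by move=> nS h; rewrite /cong -cjD; apply: nS. Qed.

Definition Rrel (G : groupType) (n : nat) (r h : 'I_n -> G) :=
  exists d, derived_subgroup d /\ forall i, cong (@Nset G) (h i) (cj d (r i)).

Lemma cj1g (G : groupType) (x : G) : cj 1 x = x.
Proof. by rewrite /cj invg1 mulg1 mul1g. Qed.

Lemma R_refl (G : groupType) (n : nat) (r : 'I_n -> G) : Rrel r r.
Proof.
exists 1; split; first by apply: (sub1 (@derived_sub G)).
by move=> i; rewrite cj1g; apply: (cong_refl _ (@N_sub G)).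
Qed.

Lemma R_sym (G : groupType) (n : nat) (r h : 'I_n -> G) : Rrel r h -> Rrel h r.
Proof.
case=> d [Dd H]; exists d^-1; split; first by apply: (subV (@derived_sub G)).
move=> i; apply: (cong_sym (@N_sub G)).
have := cong_cj d^-1 (@N_normal G) (H i); by rewrite cjK.
Qed.

Lemma R_trans (G : groupType) (n : nat) (r h k : 'I_n -> G) :
  Rrel r h -> Rrel h k -> Rrel r k.
Proof.
case=> d [Dd H1] [e [De H2]]; exists (e * d); split.
  by apply: (subM (@derived_sub G)).
move=> i; apply: (cong_trans (@N_sub G) (H2 i)).
by rewrite cjM; apply: cong_cj (@N_normal G) _.
Qed.

Definition repR (G : groupType) (n : nat) (r : 'I_n -> G) :=
  epsilon (inhabits (fun _ => 1)) (fun y => Gen y /\ Rrel r y).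

Lemma repR_spec (G : groupType) (n : nat) (r : 'I_n -> G) :
  Gen r -> Gen (repR r) /\ Rrel r (repR r).
Proof.
move=> g; apply: (epsilon_spec (inhabits (fun _ => 1)) (fun y => Gen y /\ Rrel r y)).
by exists r; split => //; apply: R_refl.
Qed.

Lemma repR_eq (G : groupType) (n : nat) (r h : 'I_n -> G) :
  Rrel r h -> repR r = repR h.
Proof.
move=> H; rewrite /repR.
have -> : (fun y => Gen y /\ Rrel r y) = (fun y => Gen y /\ Rrel h y) => //.
apply: functional_extensionality => y; apply: propositional_extensionality.
split=> -[gy Ry]; split => //; first exact: R_trans (R_sym H) Ry.
exact: R_trans H Ry.
Qed.

Definition sc (G : groupType) (d : G) :=
  epsilon (inhabits 1) (fun s => derived_subgroup s /\ Nset (s^-1 * d)).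

Lemma sc_spec (G : groupType) (d : G) :
  derived_subgroup d -> derived_subgroup (sc d) /\ Nset ((sc d)^-1 * d).
Proof.
move=> Dd; apply: (epsilon_spec (inhabits 1) (fun s => derived_subgroup s /\ Nset (s^-1 * d))).
exists d; split => //; rewrite mulVg; apply: (sub1 (@N_sub G)).
Qed.

Lemma sc_eq (G : groupType) (d d' : G) : Nset (d^-1 * d') -> sc d = sc d'.
Proof.
move=> H; rewrite /sc.
have -> : (fun s => derived_subgroup s /\ Nset (s^-1 * d)) =
          (fun s => derived_subgroup s /\ Nset (s^-1 * d')) => //.
apply: functional_extensionality => s; apply: propositional_extensionality.
split=> -[Ds Ns]; split => //.
  by have := subM (@N_sub G) Ns H; rewrite mulgA mulgK.
have := subM (@N_sub G) Ns (subV (@N_sub G) H).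
by rewrite invgM invgK mulgA mulgK.
Qed.

Lemma inj_surj_bij (A B : Type) (f : A -> B) :
  injective f -> (forall b, exists a, f a = b) -> bijective f.
Proof.
move=> fi fs.
pose g := fun b => proj1_sig (constructive_indefinite_description _ (fs b)).
have fg : forall b, f (g b) = b.
  by move=> b; rewrite /g; case: constructive_indefinite_description.
by exists g => // a; apply: fi; rewrite fg.
Qed.

Definition Fv (G : groupType) (n : nat) (i0 : 'I_n) (d : G) (z r : 'I_n -> G) : 'I_n -> G :=
  fun i => (if i == i0 then (sc d)^-1 * d else z i) * cj (sc d) (r i).

Lemma Fv_gen (G : groupType) (n : nat) (i0 : 'I_n) (d : G) (z r : 'I_n -> G) :
  derived_subgroup d -> (forall i, Nset (z i)) -> Gen r -> Gen (Fv i0 d z r).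
Proof.
move=> Dd Nz g; apply: (P1 (w := fun i => if i == i0 then (sc d)^-1 * d else z i)).
  by apply: genG_trans (genG_cj (sc d) g) => y [a [[i ->] ->]]; apply: gen_incl; exists i.
by move=> i; case: (i == i0) => //; case: (sc_spec Dd).
Qed.

Lemma R_Fv (G : groupType) (n : nat) (i0 : 'I_n) (d : G) (z r : 'I_n -> G) :
  derived_subgroup d -> (forall i, Nset (z i)) -> Rrel r (Fv i0 d z r).
Proof.
move=> Dd Nz; exists (sc d); split; first by case: (sc_spec Dd).
move=> i; apply: (cong_mul _ (@N_sub G)).
by case: (i == i0) => //; case: (sc_spec Dd).
Qed.

Lemma cong_cjN (G : groupType) (m x : G) : Nset m -> cong (@Nset G) (cj m x) x.
Proof.
move=> Nm; rewrite /cong /cj -!mulgA; apply: (subM (@N_sub G)) => //.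
rewrite mulgA; apply: (@N_normal G); apply: (subV (@N_sub G)) Nm.
Qed.

Lemma F_inj (G : groupType) (n : nat) (i0 : 'I_n) (d d' : G) (z z' r r' : 'I_n -> G) :
  derived_subgroup d -> derived_subgroup d' ->
  (forall i, Nset (z i)) -> (forall i, Nset (z' i)) -> z i0 = 1 -> z' i0 = 1 ->
  Gen r -> Gen r' -> repR r = r -> repR r' = r' ->
  Fv i0 d z r = Fv i0 d' z' r' -> [/\ d = d', z = z' & r = r'].
Proof.
move=> Dd Dd' Nz Nz' z0 z0' gr gr' er er' H.
have sN := @N_sub G; have nN := @N_normal G.
have err : r = r'.
  rewrite -er -er'; apply: repR_eq.
  apply: (R_trans (@R_Fv G n i0 d z r Dd Nz)); rewrite H; apply: R_sym; exact: R_Fv.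
subst r'.
case: (sc_spec Dd) => Ds Nm; case: (sc_spec Dd') => Ds' Nm'.
set s := sc d in Ds Nm H *; set s' := sc d' in Ds' Nm' H *.
have Hw : forall i, cong (@Nset G) (Fv i0 d z r i) (cj (sc d) (r i)).
  move=> i; apply: (cong_mul _ sN); rewrite /Fv; by case: (i == i0).
have Hw' : forall i, cong (@Nset G) (Fv i0 d' z' r i) (cj (sc d') (r i)).
  move=> i; apply: (cong_mul _ sN); rewrite /Fv; by case: (i == i0).
have Hc : forall i, cong (@Nset G) (cj s (r i)) (cj s' (r i)).
  move=> i; apply: (cong_trans sN (cong_sym sN (Hw i))); rewrite H; exact: Hw'.
pose f := s'^-1 * s.
have Hf : forall i, cong (@Nset G) (f * r i) (r i * f).
  move=> i; have := congMr f (cong_cj s'^-1 nN (Hc i)).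
  by rewrite cjK -cjM /cj mulgVK.
have Df : derived_subgroup f by apply: (subM (@derived_sub G)) => //; apply: (subV (@derived_sub G)).
have Nf := P2 Df gr Hf.
have Ndd : Nset (d^-1 * d').
  have := subM sN (subM sN (subV sN Nm) (subV sN Nf)) Nm'.
  by rewrite /f !invgM !invgK !mulgA !mulgK.
have ess : s = s' by apply: sc_eq.
have Hi : forall i, (if i == i0 then s^-1 * d else z i) = (if i == i0 then s'^-1 * d' else z' i).
  by move=> i; have := congr1 (fun t => t i) H; rewrite /Fv -/s -/s' ess => /mulIg.
have edd : d = d'.
  by have := Hi i0; rewrite eqxx ess => /mulgI.
split => //; apply: functional_extensionality => i.
have := Hi i; case: eqP => [-> _ | _ //]; by rewrite z0 z0'.
Qed.

Lemma F_surj (G : groupType) (n : nat) (i0 : 'I_n) (h : 'I_n -> G) : Gen h ->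
  exists d z r, [/\ derived_subgroup d, (forall i, Nset (z i)), z i0 = 1,
     Gen r /\ repR r = r & Fv i0 d z r = h].
Proof.
move=> gh; have sN := @N_sub G; have nN := @N_normal G.
case: (repR_spec gh) => gr Rhr.
have [d0 [Dd0 H]] := R_sym Rhr.
case: (sc_spec Dd0) => Ds Nm.
set s := sc d0 in Ds Nm.
set r := repR h in gr Rhr H *.
have Hk : forall i, Nset (h i * (cj s (r i))^-1).
  move=> i; apply: (cong_trans sN (H i)).
  have -> : d0 = s * (s^-1 * d0) by rewrite mulVKg.
  by rewrite cjM; apply: cong_cj nN _; apply: cong_cjN.
pose k := fun i => h i * (cj s (r i))^-1.
exists (s * k i0), (fun i => if i == i0 then 1 else k i), r.
have Ds' : sc (s * k i0) = s.
  symmetry; apply: sc_eq.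
  have := subM sN (subV sN Nm) (Hk i0).
  by rewrite invgM invgK !mulgA.
split.
- by apply: (subM (@derived_sub G)) => //; case: (Hk i0).
- by move=> i; case: (i == i0); [apply: (sub1 sN) | apply: Hk].
- by rewrite eqxx.
- split => //; apply: repR_eq; exact: R_sym.
- apply: functional_extensionality => i; rewrite /Fv Ds'.
  case: eqP => [-> | _]; by rewrite ?mulKg /k mulgVK.
Qed.

Theorem mainTheorem5 (G : groupType) (n : nat) (hn : (0 < n)%N) :
  card_dvd (@derived_subgroup G) (@generating_tuples G n).
Proof.
pose i0 : 'I_n := Ordinal hn.
pose Cz := {z : 'I_n -> G | (forall i, Nset (z i)) /\ z i0 = 1}.
pose Cr := {r : 'I_n -> G | Gen r /\ repR r = r}.
exists (Cz * Cr)%type.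
have Fg : forall (p : {x : G | derived_subgroup x} * (Cz * Cr)),
    @generating_tuples G n (Fv i0 (proj1_sig p.1) (proj1_sig p.2.1) (proj1_sig p.2.2)).
  case=> [[d Dd] [[z [Nz z0]] [r [gr er]]]]; exact: Fv_gen.
exists (fun p => exist _ _ (Fg p)).
apply: inj_surj_bij.
  case=> [[d Dd] [[z [Nz z0]] [r [gr er]]]] [[d' Dd'] [[z' [Nz' z0']] [r' [gr' er']]]] /= E.
  have := congr1 (@proj1_sig _ _) E => /= /(F_inj Dd Dd' Nz Nz' z0 z0' gr gr' er er') [ed ez er2].
  subst d' z' r'.
  by do !f_equal; apply: proof_irrelevance.
case=> h gh.
have [d [z [r [Dd Nz z0 [gr er] E]]]] := F_surj i0 gh.
exists (exist _ d Dd, (exist _ z (conj Nz z0), exist _ r (conj gr er))).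
subst h; f_equal; apply: proof_irrelevance.
Qed.
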